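(* Let $\Gamma$ be a metrized graph with $v$ vertices. If $v=2$ then $Kf(\Gamma)=y(\Gamma)$; if $v=3$ then $Kf(\Gamma)=2y(\Gamma)$.
   Context: A metrized graph $\Gamma$ is a finite connected graph (multiple edges and self-loops allowed) each of whose edges is identified with a closed segment of positive length, with a finite nonempty vertex set $V(\Gamma)$ containing every point of valence $\neq2$; $v=\#V(\Gamma)$, $L_i$ the length of $e_i$, $r$ the effective resistance (edges as resistors of resistance equal to length). $Kf(\Gamma)=\frac12\sum_{p,q\in V(\Gamma)}r(p,q)$. For an edge $e_i$ with end points $p_i,q_i$: if $\Gamma-e_i$ (interior deleted) is connected, $R_i$ is the effective resistance between $p_i,q_i$ in $\Gamma-e_i$, $R_{a_i,p}=\hat j_{p_i}(p,q_i)$, $R_{b_i,p}=\hat j_{q_i}(p,p_i)$ with $\hat j_z(x,y)$ the voltage function of $\Gamma-e_i$ (potential at $x$ when unit current enters at $y$ and exits at $z$, potential $0$ at $z$); if $e_i$ is a bridge, $R_{a_i,p}=0,R_{b_i,p}=R_i$ for $p$ in the component of $\Gamma-e_i$ containing $p_i$ and $R_{a_i,p}=R_i,R_{b_i,p}=0$ otherwise, with every expression in $R_i$ interpreted as its limit as $R_i\to\infty$; for a self-loop $R_i=0$. For a fixed vertex $p$ (independent of choice), $y(\Gamma)=\frac14\sum_{e_i}\frac{L_iR_i^2}{(L_i+R_i)^2}+\frac34\sum_{e_i}\frac{L_i(R_{a_i,p}-R_{b_i,p})^2}{(L_i+R_i)^2}$. *)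

(* Defs.v *)
(* A metrized graph is modelled combinatorially: a finite
   vertex type V, a finite edge type E, endpoint maps ep1 ep2 : E -> V
   (ep1 e = ep2 e is a self-loop, parallel edges allowed) and positive edge
   lengths L : E -> R.  Subgraphs Gamma - e are given by the edge subset
   S : {set E}. *)
From HB Require Import structures.
From mathcomp Require Import all_boot all_order all_algebra.
From Stdlib Require Import ClassicalEpsilon.
Set Implicit Arguments. Unset Strict Implicit. Unset Printing Implicit Defensive.
Import Order.TTheory GRing.Theory Num.Theory.
Local Open Scope ring_scope.

Section MetrizedGraph.
Variables (R : realFieldType) (V E : finType) (ep1 ep2 : E -> V) (L : E -> R).

Definition adj (S : {set E}) : rel V :=
  [rel a b | [exists e, (e \in S) &&
     (((ep1 e == a) && (ep2 e == b)) || ((ep2 e == a) && (ep1 e == b)))]].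

Definition connectedb (S : {set E}) : bool :=
  [forall a, [forall b, connect (adj S) a b]].

(* f is the potential in the resistive network with edge set S (resistance
   of edge e = L e) when unit current enters at y and exits at z, grounded
   at z: f z = 0 and (net outgoing current at w) = [w = y] - [w = z]. *)
Definition is_potential (S : {set E}) (z y : V) (f : V -> R) : Prop :=
  f z = 0 /\
  forall w : V,
    \sum_(e in S | ep1 e == w) (f w - f (ep2 e)) / L e
  + \sum_(e in S | ep2 e == w) (f w - f (ep1 e)) / L e
  = (w == y)%:R - (w == z)%:R.

(* voltage function  hat j_z(x, y)  of the network with edge set S
   (the potential above, chosen by classical description; it is unique when
   the network is connected) *)
Definition jhat (S : {set E}) (z x y : V) : R :=
  (epsilon (inhabits (fun _ : V => 0 : R)) (is_potential S z y)) x.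

Definition reff (S : {set E}) (x y : V) : R := jhat S y x x.

Definition Kf : R := 2^-1 * \sum_(p : V) \sum_(q : V) reff setT p q.

Definition minus_edge (e : E) : {set E} := ~: [set e].

Definition Ri (e : E) : R := reff (minus_edge e) (ep1 e) (ep2 e).
Definition Rai (e : E) (p : V) : R := jhat (minus_edge e) (ep1 e) p (ep2 e).
Definition Rbi (e : E) (p : V) : R := jhat (minus_edge e) (ep2 e) p (ep1 e).

(* summands of y(Gamma); for a bridge the value is the limit R_i -> +oo of
   the expression (with R_a = 0, R_b = R_i or R_a = R_i, R_b = 0), which is
   L_i in both summands. *)
Definition yterm1 (e : E) : R :=
  if connectedb (minus_edge e) then L e * Ri e ^+ 2 / (L e + Ri e) ^+ 2
  else L e.

Definition yterm2 (e : E) (p : V) : R :=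
  if connectedb (minus_edge e)
  then L e * (Rai e p - Rbi e p) ^+ 2 / (L e + Ri e) ^+ 2
  else L e.

Definition yG (p : V) : R :=
  4^-1 * \sum_(e : E) yterm1 e + (3 / 4) * \sum_(e : E) yterm2 e p.

End MetrizedGraph.

(* Submission.v *)
Require Import Defs.
From HB Require Import structures.
From mathcomp Require Import all_boot all_order all_algebra.
From mathcomp Require Import ring lra.
From Stdlib Require Import ClassicalEpsilon.
Set Implicit Arguments. Unset Strict Implicit. Unset Printing Implicit Defensive.
Import Order.TTheory GRing.Theory Num.Theory.
Local Open Scope ring_scope.


Section Gen.
Variables (R : realFieldType) (V E : finType) (ep1 ep2 : E -> V) (L : E -> R).
Hypothesis Lpos : forall e, 0 < L e.

Lemma Lnz e : L e != 0. Proof. by rewrite gt_eqF. Qed.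

Definition node (S : {set E}) (f : V -> R) (w : V) : R :=
  \sum_(e in S | ep1 e == w) (f w - f (ep2 e)) / L e
  + \sum_(e in S | ep2 e == w) (f w - f (ep1 e)) / L e.

Lemma energy (S : {set E}) f :
  \sum_w f w * node S f w = \sum_(e in S) (f (ep1 e) - f (ep2 e))^+2 / L e.
Proof.
rewrite /node.
under eq_bigr do rewrite mulrDr.
rewrite big_split /=.
have E1 : \sum_w f w * \sum_(e in S | ep1 e == w) (f w - f (ep2 e)) / L e
  = \sum_(e in S) f (ep1 e) * ((f (ep1 e) - f (ep2 e)) / L e).
  rewrite (partition_big ep1 xpredT) //=; apply: eq_bigr => w _.
  rewrite big_distrr /=.
  by apply: eq_bigr => e /andP[_ /eqP ->].
have E2 : \sum_w f w * \sum_(e in S | ep2 e == w) (f w - f (ep1 e)) / L e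
  = \sum_(e in S) f (ep2 e) * ((f (ep2 e) - f (ep1 e)) / L e).
  rewrite (partition_big ep2 xpredT) //=; apply: eq_bigr => w _.
  rewrite big_distrr /=.
  by apply: eq_bigr => e /andP[_ /eqP ->].
rewrite E1 E2 -big_split /=; apply: eq_bigr => e _.
by rewrite !mulrA -mulrDl; congr (_ * _); ring.
Qed.

Lemma pot_unique (S : {set E}) z y f g : connectedb ep1 ep2 S ->
  is_potential ep1 ep2 L S z y f -> is_potential ep1 ep2 L S z y g ->
  forall x, f x = g x.
Proof.
move=> Hc [fz Hf] [gz Hg].
pose h x := f x - g x.
have Hn : forall w, node S h w = 0.
  move=> w.
  have -> : node S h w = node S f w - node S g w.
    rewrite /node /h opprD addrACA -!sumrB; congr (_ + _);
    by apply: eq_bigr => e _; rewrite -mulrBl; congr (_ * _); ring.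
  by rewrite /node Hf Hg subrr.
have Hen : 0 = \sum_(e in S) (h (ep1 e) - h (ep2 e))^+2 / L e.
  by rewrite -energy big1 // => w _; rewrite Hn mulr0.
have Hz : forall e, e \in S -> h (ep1 e) = h (ep2 e).
  move=> e He.
  have Hnn : forall i, i \in S -> 0 <= (h (ep1 i) - h (ep2 i))^+2 / L i.
    move=> i _; apply: divr_ge0; first exact: sqr_ge0.
    exact: ltW.
  have H := @psumr_eq0P _ _ _ _ Hnn (esym Hen) e He.
  move/eqP: H; rewrite mulf_eq0 invr_eq0 (negbTE (Lnz e)) orbF sqrf_eq0 subr_eq0.
  by move=> /eqP.
have Hcl : closed (adj ep1 ep2 S) [pred x | h x == 0].
  move=> u v /existsP[e /andP[He /orP[/andP[/eqP <- /eqP <-]|/andP[/eqP <- /eqP <-]]]];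
  by rewrite !inE (Hz e He).
move=> x; apply/eqP; rewrite -subr_eq0 -/(h x).
move/forallP: Hc => /(_ z) /forallP /(_ x) Hzx.
have := closed_connect Hcl Hzx; rewrite !inE /h fz gz subrr eqxx.
by move=> <-.
Qed.

Lemma jhat_eq (S : {set E}) z y f : connectedb ep1 ep2 S ->
  is_potential ep1 ep2 L S z y f -> forall x, jhat ep1 ep2 L S z x y = f x.
Proof.
move=> Hc Hf x; rewrite /jhat; apply: (pot_unique Hc _ Hf).
by apply: epsilon_spec; exists f.
Qed.

Definition s (S : {set E}) u w := \sum_(e in S | (ep1 e == u) && (ep2 e == w)) (L e)^-1.
Definition cc S u w := s S u w + s S w u.

Lemma ccC S u w : cc S u w = cc S w u. Proof. by rewrite /cc addrC. Qed.

Lemma s_ge0 (S : {set E}) u w : 0 <= s S u w.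
Proof. by apply: sumr_ge0 => e _; rewrite invr_ge0 ltW. Qed.

Lemma cc_ge0 (S : {set E}) u w : 0 <= cc S u w.
Proof. by rewrite addr_ge0 ?s_ge0. Qed.

Lemma sum_ep2 (S : {set E}) w (F : V -> R) :
  \sum_(e in S | ep1 e == w) F (ep2 e) / L e = \sum_u s S w u * F u.
Proof.
rewrite (partition_big ep2 xpredT) //=; apply: eq_bigr => u _.
rewrite /s big_distrl /=; apply: eq_big => [e|e /andP[_ /eqP ->]]; first by rewrite andbA.
by rewrite mulrC.
Qed.

Lemma sum_ep1 (S : {set E}) w (F : V -> R) :
  \sum_(e in S | ep2 e == w) F (ep1 e) / L e = \sum_u s S u w * F u.
Proof.
rewrite (partition_big ep1 xpredT) //=; apply: eq_bigr => u _.
rewrite /s big_distrl /=; apply: eq_big => [e|e /andP[_ /eqP ->]].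
  by rewrite -andbA (andbC (ep2 e == w)).
by rewrite mulrC.
Qed.

Lemma node_c (S : {set E}) f w : node S f w = \sum_u cc S w u * (f w - f u).
Proof.
rewrite /node (sum_ep2 S w (fun u => f w - f u)) (sum_ep1 S w (fun u => f w - f u)).
by rewrite -big_split; apply: eq_bigr => u _; rewrite /cc mulrDl.
Qed.

Lemma sum_edges (F : E -> R) (K : V -> V -> R) :
  (forall e, F e = (L e)^-1 * K (ep1 e) (ep2 e)) ->
  \sum_e F e = \sum_u \sum_w K u w * s setT u w.
Proof.
move=> HF.
rewrite (partition_big ep1 xpredT) //=; apply: eq_bigr => u _.
rewrite (partition_big ep2 xpredT) //=; apply: eq_bigr => w _.
rewrite /s big_distrr /=; apply: eq_big => [e|e /andP[/eqP Hu /eqP Hw]].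
  by rewrite in_setT.
by rewrite HF Hu Hw mulrC.
Qed.

Lemma s_minus e x y : s (minus_edge e) x y =
  s setT x y - (if (ep1 e == x) && (ep2 e == y) then (L e)^-1 else 0).
Proof.
rewrite /s /minus_edge; case: ifP => H.
  rewrite [in RHS](bigD1 e) /=; last by rewrite in_setT H.
  rewrite addrC addrK; apply: eq_bigl => e'.
  by rewrite in_setC in_set1 in_setT /= andbC.
rewrite subr0; apply: eq_bigl => e'; rewrite in_setC in_set1 in_setT /=.
by case: eqP => // ->; rewrite H.
Qed.

Lemma cc_minus e x y : cc (minus_edge e) x y =
  cc setT x y - (if (ep1 e == x) && (ep2 e == y) then (L e)^-1 else 0)
              - (if (ep1 e == y) && (ep2 e == x) then (L e)^-1 else 0).
Proof. rewrite /cc !s_minus; ring. Qed.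

Lemma adj_sym (S : {set E}) : symmetric (adj ep1 ep2 S).
Proof.
move=> u v; apply/existsP/existsP => -[e He]; exists e;
by case/andP: He => -> /orP[]/andP[H1 H2]; rewrite H1 H2 ?orbT.
Qed.

Lemma s_gt0 (S : {set E}) e x y : e \in S -> ep1 e = x -> ep2 e = y -> 0 < s S x y.
Proof.
move=> He H1 H2; rewrite /s (bigD1 e) /=; last by rewrite He H1 H2 !eqxx.
have h1 : 0 < (L e)^-1 by rewrite invr_gt0.
have h2 : 0 <= \sum_(i | ((i \in S) && ((ep1 i == x) && (ep2 i == y))) && (i != e)) (L i)^-1.
  by apply: sumr_ge0 => i _; rewrite invr_ge0 ltW.
lra.
Qed.

Lemma adj_cc (S : {set E}) u v : adj ep1 ep2 S u v -> 0 < cc S u v.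
Proof.
move=> /existsP[e /andP[He /orP[/andP[/eqP H1 /eqP H2]|/andP[/eqP H1 /eqP H2]]]].
  by have := s_gt0 He H1 H2; have := s_ge0 S v u; rewrite /cc; lra.
by have := s_gt0 He H2 H1; have := s_ge0 S u v; rewrite /cc; lra.
Qed.

Lemma cc_adj (S : {set E}) u v : cc S u v != 0 -> adj ep1 ep2 S u v.
Proof.
rewrite /cc => H.
case: (boolP (adj ep1 ep2 S u v)) => // /existsPn Hn.
move: H; rewrite /s !big1 ?addr0 ?eqxx // => e /andP[He /andP[/eqP E1 /eqP E2]].
  by have := Hn e; rewrite He E1 E2 !eqxx orbT.
by have := Hn e; rewrite He E1 E2 !eqxx.
Qed.

Lemma isolated (S : {set E}) x y : x != y -> (forall v, v != x -> cc S x v = 0) ->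
  ~~ connectedb ep1 ep2 S.
Proof.
move=> xy Hv; apply/negP => Hc.
have Hcl : closed (adj ep1 ep2 S) (pred1 x).
  move=> u v Huv; rewrite !inE.
  case: (eqVneq u x) => [ux|ux]; case: (eqVneq v x) => [vx|vx];
    rewrite ?ux ?vx ?eqxx ?(negbTE ux) ?(negbTE vx) //.
    by have := adj_cc Huv; rewrite ux (Hv v vx) ltxx.
  by have := adj_cc Huv; rewrite vx ccC (Hv u ux) ltxx.
move/forallP: Hc => /(_ x) /forallP /(_ y) Hxy.
have := closed_connect Hcl Hxy; rewrite !inE eqxx eq_sym.
by rewrite (negbTE xy).
Qed.

Lemma hub_conn (S : {set E}) x : (forall v, connect (adj ep1 ep2 S) x v) -> connectedb ep1 ep2 S.
Proof.
move=> H; apply/forallP => u; apply/forallP => v.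
apply: (connect_trans (y := x)); last exact: H.
by rewrite (sym_connect_sym (@adj_sym S)).
Qed.

Lemma cc_plus e x y : cc setT x y =
  cc (minus_edge e) x y + (if (ep1 e == x) && (ep2 e == y) then (L e)^-1 else 0)
              + (if (ep1 e == y) && (ep2 e == x) then (L e)^-1 else 0).
Proof. rewrite cc_minus; ring. Qed.

End Gen.


Section Two.
Variables (R : realFieldType) (V E : finType) (ep1 ep2 : E -> V) (L : E -> R).
Hypothesis Lpos : forall e, 0 < L e.
Variables (p a : V).
Hypothesis pa : p != a.
Hypothesis mem2 : forall u, (u == p) || (u == a).

Let ap : a != p. Proof. by rewrite eq_sym. Qed.
Local Notation cc := (Submission.cc ep1 ep2 L).
Definition D2 S := cc S p a.
Definition r2 S (u w : V) := if u == w then 0 else (D2 S)^-1.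
Definition pot2 S (z y v : V) := (r2 S v z + r2 S y z - r2 S v y) / 2.

Lemma sum2 (F : V -> R) : \sum_u F u = F p + F a.
Proof.
rewrite (bigD1 p) //= (bigD1 a) //= big1 ?addr0 ?addrA // => u /andP[/negPf H1 /negPf H2].
by have := mem2 u; rewrite H1 H2.
Qed.

Lemma pot2_ok S z y : D2 S != 0 -> is_potential ep1 ep2 L S z y (pot2 S z y).
Proof.
move=> HD; split.
  by rewrite /pot2 /r2 eqxx (eq_sym y z) add0r subrr mul0r.
move=> w; change (node ep1 ep2 L S (pot2 S z y) w = (w == y)%:R - (w == z)%:R).
rewrite node_c sum2.
move: HD; rewrite /D2 => HD.
case/orP: (mem2 w) => /eqP->; case/orP: (mem2 y) => /eqP->; case/orP: (mem2 z) => /eqP->;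
rewrite /pot2 /r2 /D2 !eqxx ?(negbTE pa) ?(negbTE ap) ?(ccC _ _ _ _ a p) /=; by field.
Qed.

Lemma conn2 S : D2 S != 0 -> connectedb ep1 ep2 S.
Proof.
move=> HD; apply: (@hub_conn _ _ _ _ S p) => v.
case/orP: (mem2 v) => /eqP ->; first exact: connect0.
by apply: connect1; apply: cc_adj => //; exact: HD.
Qed.

Lemma nconn2 S : D2 S = 0 -> ~~ connectedb ep1 ep2 S.
Proof.
move=> HD; apply: (isolated Lpos pa) => v vp.
by case/orP: (mem2 v) => /eqP Hv; [rewrite Hv eqxx in vp | rewrite Hv].
Qed.

Lemma reff2 S x y : D2 S != 0 -> reff ep1 ep2 L S x y = r2 S x y.
Proof.
move=> HD; rewrite /reff (jhat_eq Lpos (conn2 HD) (pot2_ok _ _ HD)).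
rewrite /pot2 {3}/r2 eqxx subr0; by field.
Qed.

Lemma jhat2 S z x y : D2 S != 0 -> jhat ep1 ep2 L S z x y = pot2 S z y x.
Proof. by move=> HD; rewrite (jhat_eq Lpos (conn2 HD) (pot2_ok _ _ HD)). Qed.


Lemma r2_ge0 S u w : 0 <= r2 S u w.
Proof. by rewrite /r2; case: ifP => _ //; rewrite invr_ge0 /D2 cc_ge0. Qed.

Lemma yterm1_2 e : D2 setT != 0 ->
  yterm1 ep1 ep2 L e = (L e)^-1 * r2 setT (ep1 e) (ep2 e) ^+ 2.
Proof.
move=> HD; rewrite /yterm1.
have Lz := Lnz Lpos e.
case: (eqVneq (D2 (minus_edge e)) 0) => HD'.
  rewrite (negbTE (nconn2 HD')); move: HD' HD; rewrite /D2 cc_minus.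
  case/orP: (mem2 (ep1 e)) => /eqP->; case/orP: (mem2 (ep2 e)) => /eqP->;
  rewrite /r2 /D2 !eqxx ?(negbTE pa) ?(negbTE ap) /= ?subr0;
  first [ by move=> ->; rewrite eqxx | by move/eqP; rewrite subr_eq0 => /eqP -> _; field ].
rewrite (conn2 HD') /Ri (reff2 _ _ HD').
have hc : 0 < D2 (minus_edge e) by rewrite lt0r HD' /D2 cc_ge0.
have hL := Lpos e.
move: hc HD; rewrite /r2 /D2 !(cc_plus ep1 ep2 L e).
case/orP: (mem2 (ep1 e)) => /eqP->; case/orP: (mem2 (ep2 e)) => /eqP->;
rewrite !eqxx ?(negbTE pa) ?(negbTE ap) /= ?addr0 => hc HD; field;
  repeat (apply/andP; split); apply: lt0r_neq0; nra.
Qed.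

Lemma yterm2_2 e : D2 setT != 0 ->
  yterm2 ep1 ep2 L e p = (L e)^-1 * (r2 setT p (ep1 e) - r2 setT p (ep2 e)) ^+ 2.
Proof.
move=> HD; rewrite /yterm2.
have Lz := Lnz Lpos e.
case: (eqVneq (D2 (minus_edge e)) 0) => HD'.
  rewrite (negbTE (nconn2 HD')); move: HD' HD; rewrite /D2 cc_minus.
  case/orP: (mem2 (ep1 e)) => /eqP->; case/orP: (mem2 (ep2 e)) => /eqP->;
  rewrite /r2 /D2 !eqxx ?(negbTE pa) ?(negbTE ap) /= ?subr0;
  first [ by move=> ->; rewrite eqxx | by move/eqP; rewrite subr_eq0 => /eqP -> _; field ].
rewrite (conn2 HD') /Ri /Rai /Rbi (reff2 _ _ HD') !(jhat2 _ _ _ HD').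
have hc : 0 < D2 (minus_edge e) by rewrite lt0r HD' /D2 cc_ge0.
have hL := Lpos e.
move: hc HD; rewrite /pot2 /r2 /D2 !(cc_plus ep1 ep2 L e).
case/orP: (mem2 (ep1 e)) => /eqP->; case/orP: (mem2 (ep2 e)) => /eqP->;
rewrite !eqxx ?(negbTE pa) ?(negbTE ap) /= ?addr0 => hc HD; field;
  repeat (apply/andP; split); apply: lt0r_neq0; nra.
Qed.

Lemma main2 : connectedb ep1 ep2 setT -> Kf ep1 ep2 L = yG ep1 ep2 L p.
Proof.
move=> Hc.
have HD : D2 setT != 0.
  by apply/eqP => H; move: Hc; rewrite (negbTE (nconn2 H)).
rewrite /yG (@sum_edges _ _ _ ep1 ep2 L _ (fun u w => r2 setT u w ^+ 2) (yterm1_2 ^~ HD)).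
rewrite (@sum_edges _ _ _ ep1 ep2 L _ (fun u w => (r2 setT p u - r2 setT p w) ^+ 2) (yterm2_2 ^~ HD)).
rewrite /Kf; under eq_bigr do under eq_bigr do rewrite reff2 //.
rewrite !sum2; move: HD; rewrite /r2 /D2 /cc !eqxx ?(negbTE pa) ?(negbTE ap) /= => HD.
by field.
Qed.

End Two.


Section Three.
Variables (R : realFieldType) (V E : finType) (ep1 ep2 : E -> V) (L : E -> R).
Hypothesis Lpos : forall e, 0 < L e.
Variables (p a b : V).
Hypotheses (pa : p != a) (pb : p != b) (ab : a != b).
Hypothesis mem3 : forall u, [|| u == p, u == a | u == b].

Let ap : a != p. Proof. by rewrite eq_sym. Qed.
Let bp : b != p. Proof. by rewrite eq_sym. Qed.
Let ba : b != a. Proof. by rewrite eq_sym. Qed.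
Local Notation cc := (Submission.cc ep1 ep2 L).
Definition T3 S := cc S p a + cc S p b + cc S a b.
Definition D3 S := cc S p a * cc S p b + cc S p b * cc S a b + cc S a b * cc S p a.
Definition r3 S (u w : V) := if u == w then 0 else (T3 S - cc S u w) / D3 S.
Definition pot3 S (z y v : V) := (r3 S v z + r3 S y z - r3 S v y) / 2.

Ltac simpeq := rewrite ?eqxx ?(negbTE pa) ?(negbTE ap) ?(negbTE pb) ?(negbTE bp)
  ?(negbTE ab) ?(negbTE ba) /=.
Ltac normcc := rewrite ?(ccC _ _ _ _ a p) ?(ccC _ _ _ _ b p) ?(ccC _ _ _ _ b a).

Lemma sum3 (F : V -> R) : \sum_u F u = F p + F a + F b.
Proof.
rewrite (bigD1 p) //= (bigD1 a) //= (bigD1 b) /=; last by rewrite bp ba.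
rewrite big1 ?addr0 ?addrA // => u /andP[/andP[/negPf H1 /negPf H2] /negPf H3].
by have := mem3 u; rewrite H1 H2 H3.
Qed.

Lemma D3_ge0 S : 0 <= D3 S.
Proof.
by rewrite /D3 !addr_ge0 // mulr_ge0 // cc_ge0.
Qed.

Lemma pot3_ok S z y : D3 S != 0 -> is_potential ep1 ep2 L S z y (pot3 S z y).
Proof.
move=> HD; split.
  by rewrite /pot3 /r3 eqxx (eq_sym y z) ccC add0r subrr mul0r.
move=> w; change (node ep1 ep2 L S (pot3 S z y) w = (w == y)%:R - (w == z)%:R).
rewrite node_c sum3.
have hD : 0 < D3 S by rewrite lt0r HD D3_ge0.
move: hD; rewrite /D3 => hD.
case/or3P: (mem3 w) => /eqP->; case/or3P: (mem3 y) => /eqP->; case/or3P: (mem3 z) => /eqP->;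
rewrite /pot3 /r3 /T3 /D3; simpeq; normcc; field;
  repeat (apply/andP; split); apply: lt0r_neq0; nra.
Qed.


Lemma cadj S u v : cc S u v != 0 -> connect (adj ep1 ep2 S) u v.
Proof. by move=> H; apply: connect1; apply: cc_adj => //; exact: H. Qed.

Lemma cadj' S u v : cc S v u != 0 -> connect (adj ep1 ep2 S) u v.
Proof. by rewrite ccC; apply: cadj. Qed.

Lemma conn3 S : D3 S != 0 -> connectedb ep1 ep2 S.
Proof.
move=> HD.
have [H1|H1] := eqVneq (cc S p a * cc S p b) 0; last first.
  move: H1; rewrite mulf_eq0 negb_or => /andP[h1 h2].
  apply: (@hub_conn _ _ _ _ S p) => v; case/or3P: (mem3 v) => /eqP->;
  by [exact: connect0 | apply: cadj].
have [H2|H2] := eqVneq (cc S p b * cc S a b) 0; last first.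
  move: H2; rewrite mulf_eq0 negb_or => /andP[h1 h2].
  apply: (@hub_conn _ _ _ _ S b) => v; case/or3P: (mem3 v) => /eqP->;
  by [exact: connect0 | apply: cadj'].
have [H3|H3] := eqVneq (cc S a b * cc S p a) 0; last first.
  move: H3; rewrite mulf_eq0 negb_or => /andP[h1 h2].
  apply: (@hub_conn _ _ _ _ S a) => v; case/or3P: (mem3 v) => /eqP->;
  by [exact: connect0 | apply: cadj | apply: cadj'].
by move: HD; rewrite /D3 H1 H2 H3 !addr0 eqxx.
Qed.

Lemma D3_0 S : D3 S = 0 ->
  [/\ cc S p a * cc S p b = 0, cc S p b * cc S a b = 0 & cc S a b * cc S p a = 0].
Proof.
rewrite /D3 => /eqP.
have h1 : 0 <= cc S p a * cc S p b by rewrite mulr_ge0 // cc_ge0.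
have h2 : 0 <= cc S p b * cc S a b by rewrite mulr_ge0 // cc_ge0.
have h3 : 0 <= cc S a b * cc S p a by rewrite mulr_ge0 // cc_ge0.
rewrite paddr_eq0 ?addr_ge0 // paddr_eq0 //.
by case/andP=> /andP[/eqP -> /eqP ->] /eqP ->.
Qed.

Lemma nconn3 S : D3 S = 0 -> ~~ connectedb ep1 ep2 S.
Proof.
move=> /D3_0 [H1 H2 H3].
have [Ha|Ha] := eqVneq (cc S p a) 0.
  move/eqP: H2; rewrite mulf_eq0 => /orP[] /eqP Hb.
    apply: (isolated Lpos pa) => v vp.
    by case/or3P: (mem3 v) => /eqP Hv; rewrite Hv ?eqxx in vp *.
  apply: (isolated Lpos ap) => v vp.
  by case/or3P: (mem3 v) => /eqP Hv; rewrite Hv ?eqxx ?(ccC _ _ _ _ a p) in vp *.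
move/eqP: H1; rewrite mulf_eq0 (negbTE Ha) /= => /eqP Hb.
move/eqP: H3; rewrite mulf_eq0 (negbTE Ha) orbF => /eqP Hc.
apply: (isolated Lpos bp) => v vp.
by case/or3P: (mem3 v) => /eqP Hv; rewrite Hv ?eqxx ?(ccC _ _ _ _ b p) ?(ccC _ _ _ _ b a) in vp *.
Qed.

Lemma r3_ge0 S u w : 0 <= r3 S u w.
Proof.
rewrite /r3; case: ifP => // /negbT Huw; apply: divr_ge0; last exact: D3_ge0.
have h1 : 0 <= cc S p a by apply: cc_ge0.
have h2 : 0 <= cc S p b by apply: cc_ge0.
have h3 : 0 <= cc S a b by apply: cc_ge0.
rewrite /T3.
by case/or3P: (mem3 u) => /eqP Hu; case/or3P: (mem3 w) => /eqP Hw;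
  rewrite Hu Hw in Huw *; normcc; first [by rewrite eqxx in Huw | lra].
Qed.

Lemma reff3 S x y : D3 S != 0 -> reff ep1 ep2 L S x y = r3 S x y.
Proof.
move=> HD; rewrite /reff (jhat_eq Lpos (conn3 HD) (pot3_ok _ _ HD)).
by rewrite /pot3 {3}/r3 eqxx subr0; field.
Qed.

Lemma jhat3 S z x y : D3 S != 0 -> jhat ep1 ep2 L S z x y = pot3 S z y x.
Proof. by move=> HD; rewrite (jhat_eq Lpos (conn3 HD) (pot3_ok _ _ HD)). Qed.


Lemma bridge1 (l g X D Dp : R) : l * g = 1 -> D = Dp + g * X -> Dp = 0 -> D != 0 ->
  l = g * (X / D) ^+ 2.
Proof.
move=> Lg -> ->; rewrite add0r mulf_eq0 negb_or => /andP[g0 X0].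
have -> : l = g^-1 by apply: (mulIf g0); rewrite Lg mulVf.
by field; rewrite g0 X0.
Qed.

Lemma bridge3 (l g T A B D Dp : R) : l * g = 1 -> D = Dp + g * (A + B) -> Dp = 0 ->
  A * B = 0 -> D != 0 -> l = g * ((T - A) / D - (T - B) / D) ^+ 2.
Proof.
move=> Lg -> -> AB; rewrite add0r mulf_eq0 negb_or => /andP[g0 X0].
have -> : l = g^-1 by apply: (mulIf g0); rewrite Lg mulVf.
have -> : (T - A) / (g * (A + B)) - (T - B) / (g * (A + B)) = (B - A) / (g * (A + B)).
  by field; rewrite g0 X0.
rewrite expr_div_n (_ : (B - A) ^+ 2 = (A + B) ^+ 2 - 4 * (A * B)); last by ring.
by rewrite AB mulr0 subr0; field; rewrite g0 X0.
Qed.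

Ltac contra_tac HD HD' e Hu Hw :=
  exfalso; move: HD; rewrite (_ : D3 setT = D3 (minus_edge e)) ?HD' ?eqxx //;
  rewrite /D3 !(cc_plus ep1 ep2 L e) Hu Hw; simpeq; rewrite ?addr0 ?subr0; done.

Lemma yterm1_3 e : D3 setT != 0 ->
  yterm1 ep1 ep2 L e = (L e)^-1 * r3 setT (ep1 e) (ep2 e) ^+ 2.
Proof.
move=> HD; rewrite /yterm1.
have Lz := Lnz Lpos e.
have Lg : L e * (L e)^-1 = 1 by rewrite mulfV.
case: (eqVneq (D3 (minus_edge e)) 0) => HD'.
  rewrite (negbTE (nconn3 HD')).
  case/or3P: (mem3 (ep1 e)) => /eqP Hu; case/or3P: (mem3 (ep2 e)) => /eqP Hw;
  rewrite Hu Hw /r3; simpeq;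
  first [ contra_tac HD HD' e Hu Hw
        | apply: (bridge1 Lg _ HD' HD); rewrite /D3 /T3 !(cc_plus ep1 ep2 L e) Hu Hw;
          simpeq; rewrite ?addr0; normcc; ring ].
rewrite (conn3 HD') /Ri (reff3 _ _ HD').
have hD : 0 < D3 (minus_edge e) by rewrite lt0r HD' D3_ge0.
have h1 : 0 <= cc (minus_edge e) p a by apply: cc_ge0.
have h2 : 0 <= cc (minus_edge e) p b by apply: cc_ge0.
have h3 : 0 <= cc (minus_edge e) a b by apply: cc_ge0.
have hL := Lpos e.
move: hD; rewrite /r3 /T3 /D3 !(cc_plus ep1 ep2 L e) => hD.
case/or3P: (mem3 (ep1 e)) => /eqP->; case/or3P: (mem3 (ep2 e)) => /eqP->;
simpeq; rewrite ?addr0; normcc; field;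
  repeat (apply/andP; split); apply: lt0r_neq0; nra.
Qed.


Lemma yterm2_3 e : D3 setT != 0 ->
  yterm2 ep1 ep2 L e p = (L e)^-1 * (r3 setT p (ep1 e) - r3 setT p (ep2 e)) ^+ 2.
Proof.
move=> HD; rewrite /yterm2.
have Lz := Lnz Lpos e.
have Lg : L e * (L e)^-1 = 1 by rewrite mulfV.
case: (eqVneq (D3 (minus_edge e)) 0) => HD'.
  rewrite (negbTE (nconn3 HD')).
  have [AB _ _] := D3_0 HD'.
  case/or3P: (mem3 (ep1 e)) => /eqP Hu; case/or3P: (mem3 (ep2 e)) => /eqP Hw;
  rewrite Hu Hw /r3; simpeq; rewrite ?sub0r ?subr0 ?sqrrN;
  first [ contra_tac HD HD' e Hu Hw
        | apply: (bridge1 Lg _ HD' HD); rewrite /D3 /T3 !(cc_plus ep1 ep2 L e) Hu Hw;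
          simpeq; rewrite ?addr0; normcc; ring
        | apply: (bridge3 _ Lg _ HD' _ HD); [rewrite /D3 /T3 !(cc_plus ep1 ep2 L e) Hu Hw;
          simpeq; rewrite ?addr0; normcc; ring | 
          move: AB; rewrite !(cc_minus ep1 ep2 L e) Hu Hw; simpeq; rewrite ?subr0 // mulrC //] ].
rewrite (conn3 HD') /Ri /Rai /Rbi (reff3 _ _ HD') !(jhat3 _ _ _ HD').
have hD : 0 < D3 (minus_edge e) by rewrite lt0r HD' D3_ge0.
have h1 : 0 <= cc (minus_edge e) p a by apply: cc_ge0.
have h2 : 0 <= cc (minus_edge e) p b by apply: cc_ge0.
have h3 : 0 <= cc (minus_edge e) a b by apply: cc_ge0.
have hL := Lpos e.
move: hD; rewrite /pot3 /r3 /T3 /D3 !(cc_plus ep1 ep2 L e) => hD.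
case/or3P: (mem3 (ep1 e)) => /eqP->; case/or3P: (mem3 (ep2 e)) => /eqP->;
simpeq; rewrite ?addr0; normcc; field;
  repeat (apply/andP; split); apply: lt0r_neq0; nra.
Qed.


Lemma main3 : connectedb ep1 ep2 setT -> Kf ep1 ep2 L = 2 * yG ep1 ep2 L p.
Proof.
move=> Hc.
have HD : D3 setT != 0.
  by apply/eqP => H; move: Hc; rewrite (negbTE (nconn3 H)).
have hD : 0 < D3 setT by rewrite lt0r HD D3_ge0.
rewrite /yG (@sum_edges _ _ _ ep1 ep2 L _ (fun u w => r3 setT u w ^+ 2) (yterm1_3 ^~ HD)).
rewrite (@sum_edges _ _ _ ep1 ep2 L _ (fun u w => (r3 setT p u - r3 setT p w) ^+ 2) (yterm2_3 ^~ HD)).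
rewrite /Kf; under eq_bigr do under eq_bigr do rewrite reff3 //.
rewrite !sum3; move: hD; rewrite /r3 /T3 /D3; simpeq; rewrite /cc => hD.
field; repeat (apply/andP; split); apply: lt0r_neq0; nra.
Qed.

End Three.

Unset Implicit Arguments.

Theorem corollary3p10 (R : realFieldType) (V E : finType)
    (ep1 ep2 : E -> V) (L : E -> R) :
  (forall e : E, 0 < L e) ->
  connectedb ep1 ep2 [set: E] ->
  (#|V| = 2%N -> forall p : V, Kf ep1 ep2 L = yG ep1 ep2 L p) /\
  (#|V| = 3%N -> forall p : V, Kf ep1 ep2 L = 2 * yG ep1 ep2 L p).
Proof.
move=> Lpos Hc; split.
- move=> HV p.
  have : #|[set~ p]| == 1%N by rewrite cardsC1 HV.
  case/cards1P => a Ha.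
  have pa : p != a.
    have H : a \in [set~ p] by rewrite Ha set11.
    by move: H; rewrite !inE eq_sym.
  have mem2 : forall u, (u == p) || (u == a).
    move=> u; case: (eqVneq u p) => //= up.
    have H : u \in [set~ p] by rewrite !inE up.
    by move: H; rewrite Ha inE.
  exact: (main2 Lpos pa mem2 Hc).
- move=> HV p.
  have : #|[set~ p]| == 2%N by rewrite cardsC1 HV.
  case/cards2P => a [b [ab Hab]].
  have pa : p != a.
    have H : a \in [set~ p] by rewrite Hab !inE eqxx.
    by move: H; rewrite !inE eq_sym.
  have pb : p != b.
    have H : b \in [set~ p] by rewrite Hab !inE eqxx orbT.
    by move: H; rewrite !inE eq_sym.
  have mem3 : forall u, [|| u == p, u == a | u == b].
    move=> u; case: (eqVneq u p) => //= up.
    have H : u \in [set~ p] by rewrite !inE up.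
    by move: H; rewrite Hab !inE.
  exact: (main3 Lpos pa pb ab mem3 Hc).
Qed.
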